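(* Let $\mu_0\cdots\mu_4\neq0$ and suppose $\mu_0+\mu_1+\mu_2-\mu_3-\mu_4\neq0$ and $\mu_0+\mu_3+\mu_4-\mu_1-\mu_2\neq0$. Put $$\alpha=\frac{2\mu_1\mu_2}{\mu_0+\mu_1+\mu_2-\mu_3-\mu_4},\qquad \beta=\frac{2\mu_3\mu_4}{\mu_0+\mu_3+\mu_4-\mu_1-\mu_2},$$ and let $R$ be the quadric in $\mathbb{P}^3$ defined by $$(\mu_1X_2+\mu_2X_1)(\mu_3X_4+\mu_4X_3)+\alpha(\mu_0X_3X_4+\mu_3X_0X_4+\mu_4X_0X_3)+\beta(\mu_0X_1X_2+\mu_1X_0X_2+\mu_2X_0X_1)+\alpha\beta X_0^2 .$$ Then $R$ is always singular (rank $\le 3$ as a quadric on $\mathbb{P}^3$), with singular point $[\mu_1+\mu_2-\mu_3-\mu_4:-\mu_1:-\mu_2:\mu_3:\mu_4]$. Moreover $R$ has rank $\le2$ (i.e. is a union of two planes) if and only if $$\sum_{i=0}^4\mu_i^3-\sum_{i\neq j}\mu_i^2\mu_j+2\sum_{i<j<k}\mu_i\mu_j\mu_k=0.$$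
   Context: $\mathbb{P}^3$ is the hyperplane $\sum_{i=0}^4X_i=0$ in $\mathbb{P}^4$ with homogeneous coordinates $[X_0:\dots:X_4]$, over $\mathbb{C}$. The middle sum runs over ordered pairs of distinct indices, the last over 3-element subsets. *)

(* Defs.v *)
From HB Require Import structures.
From mathcomp Require Import all_boot all_order all_algebra.
Set Implicit Arguments. Unset Strict Implicit. Unset Printing Implicit Defensive.
Import Order.TTheory GRing.Theory Num.Theory.
Local Open Scope ring_scope.

(* Homogeneous coordinates X_0..X_4 of P^4 are indexed by 'I_5;
   a point (vector of C^5) is a function 'I_5 -> C. *)
Definition o0 : 'I_5 := @Ordinal 5 0 isT.
Definition o1 : 'I_5 := @Ordinal 5 1 isT.
Definition o2 : 'I_5 := @Ordinal 5 2 isT.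
Definition o3 : 'I_5 := @Ordinal 5 3 isT.
Definition o4 : 'I_5 := @Ordinal 5 4 isT.

Section Defs.
Variable C : numClosedFieldType.

Definition alphaR (mu : 'I_5 -> C) : C :=
  2 * mu o1 * mu o2 / (mu o0 + mu o1 + mu o2 - mu o3 - mu o4).
Definition betaR (mu : 'I_5 -> C) : C :=
  2 * mu o3 * mu o4 / (mu o0 + mu o3 + mu o4 - mu o1 - mu o2).

Definition Rform (mu : 'I_5 -> C) (X : 'I_5 -> C) : C :=
  let a := alphaR mu in let b := betaR mu in
  (mu o1 * X o2 + mu o2 * X o1) * (mu o3 * X o4 + mu o4 * X o3)
  + a * (mu o0 * X o3 * X o4 + mu o3 * X o0 * X o4 + mu o4 * X o0 * X o3)
  + b * (mu o0 * X o1 * X o2 + mu o1 * X o0 * X o2 + mu o2 * X o0 * X o1)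
  + a * b * X o0 ^+ 2.

Definition polar (q : ('I_5 -> C) -> C) (x y : 'I_5 -> C) : C :=
  q (fun i => x i + y i) - q x - q y.

(* P^3 = the hyperplane sum_i X_i = 0 of P^4. *)
Definition inP3 (x : 'I_5 -> C) : Prop := \sum_i x i = 0.

Definition P3basis (k : 'I_4) : 'I_5 -> C :=
  fun i => (i == widen_ord (leqnSn 4) k)%:R - (i == ord_max)%:R.

(* Gram matrix (of the polar form) of q restricted to the hyperplane,
   in the basis above; its rank is the rank of the quadric q on P^3. *)
Definition gramP3 (q : ('I_5 -> C) -> C) : 'M[C]_4 :=
  \matrix_(k, l) polar q (P3basis k) (P3basis l).

Definition rankP3 (q : ('I_5 -> C) -> C) : nat := \rank (gramP3 q).

Definition singular_pointP3 (q : ('I_5 -> C) -> C) (p : 'I_5 -> C) : Prop :=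
  (exists i, p i != 0) /\ inP3 p /\ q p = 0 /\
  (forall w, inP3 w -> polar q p w = 0).

Definition singpt (mu : 'I_5 -> C) : 'I_5 -> C :=
  fun i => [:: mu o1 + mu o2 - mu o3 - mu o4; - mu o1; - mu o2; mu o3; mu o4]`_i.

Definition cubicR (mu : 'I_5 -> C) : C :=
  \sum_(i : 'I_5) mu i ^+ 3
  - \sum_(i : 'I_5) \sum_(j : 'I_5 | j != i) mu i ^+ 2 * mu j
  + 2 * \sum_(i : 'I_5) \sum_(j : 'I_5 | (i < j)%N)
          \sum_(k : 'I_5 | (j < k)%N) mu i * mu j * mu k.

End Defs.

(* Main.v *)
Require Import Defs.
From HB Require Import structures.
From mathcomp Require Import all_boot all_order all_algebra.
From mathcomp Require Import ring.
Import Order.TTheory GRing.Theory Num.Theory.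
Local Open Scope ring_scope.
Set Implicit Arguments. Unset Strict Implicit.

Lemma det33f (R : comNzRingType) (f : nat -> nat -> R) :
  \det (\matrix_(i < 3, j < 3) f i j) = f 0 0 * (f 1 1 * f 2 2 - f 1 2 * f 2 1)
         - f 0 1 * (f 1 0 * f 2 2 - f 1 2 * f 2 0)
         + f 0 2 * (f 1 0 * f 2 1 - f 1 1 * f 2 0).
Proof.
rewrite (expand_det_row _ 0) !big_ord_recr big_ord0 /= /cofactor.
rewrite !(expand_det_row _ 0) !big_ord_recr !big_ord0 /= /cofactor.
rewrite !det_mx11 !mxE /= /bump /=. ring.
Qed.

Lemma sum5 (C : nmodType) (x : 'I_5 -> C) : \sum_i x i = x o0 + x o1 + x o2 + x o3 + x o4.
Proof.
rewrite !big_ord_recl big_ord0 addr0 !addrA.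
by congr (_+_+_+_+_); congr (x _); apply/val_inj.
Qed.
Lemma sum5c (C : nmodType) (P : pred 'I_5) (x : 'I_5 -> C) : \sum_(i | P i) x i =
  (if P o0 then x o0 else 0) + (if P o1 then x o1 else 0) + (if P o2 then x o2 else 0)
  + (if P o3 then x o3 else 0) + (if P o4 then x o4 else 0).
Proof. by rewrite big_mkcond sum5. Qed.

Definition cubicX {C : numClosedFieldType} (mu : 'I_5 -> C) : C :=
  let m0 := mu o0 in let m1 := mu o1 in let m2 := mu o2 in let m3 := mu o3 in let m4 := mu o4 in
  m0^+3 + m1^+3 + m2^+3 + m3^+3 + m4^+3
  - (m0^+2 * (m1+m2+m3+m4) + m1^+2 * (m0+m2+m3+m4) + m2^+2 * (m0+m1+m3+m4)
     + m3^+2 * (m0+m1+m2+m4) + m4^+2 * (m0+m1+m2+m3))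
  + 2 * (m0 * m1 * m2 + m0 * m1 * m3 + m0 * m1 * m4 + m0 * m2 * m3 + m0 * m2 * m4 + m0 * m3 * m4
         + m1 * m2 * m3 + m1 * m2 * m4 + m1 * m3 * m4 + m2 * m3 * m4).

Lemma cubicE (C : numClosedFieldType) (mu : 'I_5 -> C) : cubicR mu = cubicX mu.
Proof. rewrite /cubicR !sum5 !sum5c /= /cubicX. ring. Qed.

Definition Gt {C : numClosedFieldType} (mu : 'I_5 -> C) (a b : C) (k l : nat) : C :=
  let m0 := mu o0 in let m1 := mu o1 in let m2 := mu o2 in let m3 := mu o3 in let m4 := mu o4 in
  match k, l with
  | 0, 0 => 2 * a * b - 2 * a * m3
  | 0, 1 | 1, 0 => b * m2 - a * m3 - m2 * m3
  | 0, 2 | 2, 0 => b * m1 - a * m3 - m1 * m3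
  | 0, 3 | 3, 0 => a * m4 - a * m3 - a * m0
  | 1, 1 => -2 * m2 * m3
  | 1, 2 | 2, 1 => b * m0 - m2 * m3 - m1 * m3
  | 1, 3 | 3, 1 => m2 * m4 - m2 * m3 - a * m0
  | 2, 2 => -2 * m1 * m3
  | 2, 3 | 3, 2 => m1 * m4 - m1 * m3 - a * m0
  | 3, 3 => -2 * a * m0
  | _, _ => 0
  end.

Lemma gramE (C : numClosedFieldType) (mu : 'I_5 -> C) :
  gramP3 (Rform mu) = \matrix_(k < 4, l < 4) Gt mu (alphaR mu) (betaR mu) k l.
Proof.
apply/matrixP=> k l; rewrite !mxE /polar /Rform /P3basis.
set a := alphaR mu; set b := betaR mu.
case: k => [[|[|[|[|k]]]] Hk] //; case: l => [[|[|[|[|l]]]] Hl] //=.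
all: ring.
Qed.

Definition vn {C : numClosedFieldType} (mu : 'I_5 -> C) (k : nat) : C :=
  [:: mu o1 + mu o2 - mu o3 - mu o4; - mu o1; - mu o2; mu o3]`_k.

Lemma kerG (C : numClosedFieldType) (mu : 'I_5 -> C) :
  mu o0 + mu o1 + mu o2 - mu o3 - mu o4 != 0 ->
  mu o0 + mu o3 + mu o4 - mu o1 - mu o2 != 0 ->
  (\row_(k < 4) vn mu k) *m gramP3 (Rform mu) = 0.
Proof.
move=> H1 H2.
apply/matrixP=> i j; rewrite gramE !mxE !big_ord_recr big_ord0 /= !mxE /=.
rewrite /alphaR /betaR /vn.
case: j => [[|[|[|[|j]]]] Hj] //=.
all: field; by rewrite ?H1 ?H2.
Qed.

Definition Emx {C : numClosedFieldType} : 'M[C]_(3,4) := \matrix_(i < 3, j < 4) ((i : nat) == j)%:R.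

Lemma G3E (C : numClosedFieldType) (mu : 'I_5 -> C) a b :
  \matrix_(i < 3, j < 3) Gt mu a b i j
  = Emx *m (\matrix_(k < 4, l < 4) Gt mu a b k l) *m Emx^T.
Proof.
apply/matrixP=> i j; rewrite !mxE !big_ord_recr big_ord0 /= !mxE.
rewrite !big_ord_recr big_ord0 /= !mxE /=.
case: i => [[|[|[|i]]] Hi] //; case: j => [[|[|[|j]]] Hj] //=.
all: rewrite ?big_ord0; ring.
Qed.

Definition Pmx {C : numClosedFieldType} (mu : 'I_5 -> C) : 'M[C]_(4,3) :=
  \matrix_(i < 4, j < 3) (if (i : nat) == 3%N then - vn mu j / mu o3 else ((i : nat) == j)%:R).

Lemma GP (C : numClosedFieldType) (mu : 'I_5 -> C) :
  mu o0 + mu o1 + mu o2 - mu o3 - mu o4 != 0 ->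
  mu o0 + mu o3 + mu o4 - mu o1 - mu o2 != 0 ->
  mu o3 != 0 ->
  \matrix_(k < 4, l < 4) Gt mu (alphaR mu) (betaR mu) k l
  = Pmx mu *m (\matrix_(i < 3, j < 3) Gt mu (alphaR mu) (betaR mu) i j) *m (Pmx mu)^T.
Proof.
move=> H1 H2 H3.
apply/matrixP=> i j; rewrite !mxE !big_ord_recr big_ord0 /= !mxE.
rewrite !big_ord_recr big_ord0 /= !mxE /=.
rewrite /alphaR /betaR /vn.
case: i => [[|[|[|[|i]]]] Hi] //; case: j => [[|[|[|[|j]]]] Hj] //=.
all: rewrite ?big_ord0; field; by rewrite ?H1 ?H2 ?H3.
Qed.

Lemma detG3 (C : numClosedFieldType) (mu : 'I_5 -> C) :
  mu o0 + mu o1 + mu o2 - mu o3 - mu o4 != 0 ->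
  mu o0 + mu o3 + mu o4 - mu o1 - mu o2 != 0 ->
  \det (\matrix_(i < 3, j < 3) Gt mu (alphaR mu) (betaR mu) i j)
  = 4 * mu o0 * mu o1 * mu o2 * mu o3 ^+ 3 * mu o4
    / ((mu o0 + mu o1 + mu o2 - mu o3 - mu o4) ^+ 2 * (mu o0 + mu o3 + mu o4 - mu o1 - mu o2) ^+ 2)
    * cubicX mu.
Proof.
move=> H1 H2.
rewrite det33f /Gt /cubicX /alphaR /betaR /=.
field; by rewrite ?H1 ?H2.
Qed.

Lemma singP (C : numClosedFieldType) (mu : 'I_5 -> C) :
  mu o3 != 0 ->
  mu o0 + mu o1 + mu o2 - mu o3 - mu o4 != 0 ->
  mu o0 + mu o3 + mu o4 - mu o1 - mu o2 != 0 ->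
  singular_pointP3 (Rform mu) (singpt mu).
Proof.
move=> H3 H1 H2; split; first by exists o3.
split; first by rewrite /inP3 sum5 /singpt /=; ring.
split; first by rewrite /Rform /singpt /alphaR /betaR /=; field; rewrite ?H1 ?H2.
move=> w; rewrite /inP3 sum5 => Hw.
have E4 : w o4 = -(w o0 + w o1 + w o2 + w o3).
  by apply/eqP; rewrite -subr_eq0 opprK addrC Hw.
rewrite /polar /Rform /singpt /= E4 /alphaR /betaR.
field; by rewrite ?H1 ?H2.
Qed.

Unset Implicit Arguments.

Theorem proposition8 (C : numClosedFieldType) (mu : 'I_5 -> C) :
  \prod_i mu i != 0 ->
  mu o0 + mu o1 + mu o2 - mu o3 - mu o4 != 0 ->
  mu o0 + mu o3 + mu o4 - mu o1 - mu o2 != 0 ->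
  [/\ (rankP3 (Rform mu) <= 3)%N,
      singular_pointP3 (Rform mu) (singpt mu)
    & (rankP3 (Rform mu) <= 2)%N <-> cubicR mu = 0].
Proof.
move=> Hp H1 H2.
have Hmu : forall i, mu i != 0 by move=> i; move/prodf_neq0: Hp; apply.
have GE := gramE mu. have K := kerG H1 H2.
have nU : gramP3 (Rform mu) \notin unitmx.
  apply/negP=> U.
  have v0 : (\row_(k < 4) vn mu k) = 0.
    by rewrite -[X in X = _]mulmx1 -(mulmxV U) mulmxA K mul0mx.
  have := congr1 (fun M : 'rV[C]_4 => M 0 (inord 3)) v0.
  rewrite !mxE inordK // /vn /= => /eqP; by rewrite (negbTE (Hmu o3)).
have r3 : (rankP3 (Rform mu) <= 3)%N.
  rewrite /rankP3; have := rank_leq_row (gramP3 (Rform mu)).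
  rewrite -row_free_unit /row_free in nU.
  by rewrite leq_eqVlt (negbTE nU).
split => //; first exact: singP.
set G3 := \matrix_(i < 3, j < 3) Gt mu (alphaR mu) (betaR mu) i j.
have rG : rankP3 (Rform mu) = \rank G3.
  rewrite /rankP3; apply/eqP; rewrite eqn_leq; apply/andP; split.
  - rewrite GE (GP H1 H2 (Hmu o3)).
    apply: leq_trans (mxrankM_maxl _ _) _; exact: mxrankM_maxr.
  - rewrite /G3 G3E -GE.
    apply: leq_trans (mxrankM_maxl _ _) _; exact: mxrankM_maxr.
have hK : 4 * mu o0 * mu o1 * mu o2 * mu o3 ^+ 3 * mu o4
    / ((mu o0 + mu o1 + mu o2 - mu o3 - mu o4) ^+ 2 * (mu o0 + mu o3 + mu o4 - mu o1 - mu o2) ^+ 2) != 0.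
  apply: mulf_neq0; last by rewrite invr_eq0 mulf_eq0 !expf_eq0 /= (negbTE H1) (negbTE H2).
  by rewrite !mulf_neq0 ?expf_neq0 ?Hmu // pnatr_eq0.
have key : (\rank G3 <= 2)%N = (cubicX mu == 0).
  have -> : (\rank G3 <= 2)%N = ~~ row_free G3.
    rewrite /row_free; move: (rank_leq_row G3); rewrite leq_eqVlt.
    case/orP=> [/eqP -> //| lt3]; by rewrite (ltn_eqF lt3).
  by rewrite row_free_unit unitmxE unitfE detG3 // mulf_eq0 (negbTE hK) negbK.
rewrite rG key cubicE; split; [by move/eqP | by move->].
Qed.
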